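(* Let $(\xi_n)_{n\geq1}$ be i.i.d. with $\mathbf{P}(\xi_1=1)=p=1-\mathbf{P}(\xi_1=-1)$, $p\in(0,1)$. For $x\geq1$ set $W_0:=x$, $B_1:=1$, $W_n:=W_{n-1}+\xi_nB_n$, $B_{n+1}:=B_n2^{\xi_n}$ for $n\geq1$, and $f(x,p):=\mathbf{P}(W_n\leq0\text{ for some }n)$. Then for each fixed $x>2$, the function $p\mapsto f(x,p)$ is strictly increasing on $(0,1/2)$.
   Context: $f(x,p)$ is the ruin probability of a gambler with initial fortune $x$ who starts by betting $1$, doubles the bet after each win and halves it after each loss, winning each round independently with probability $p$. *)

(* Defs.v *)
From HB Require Import structures.
From mathcomp Require Import all_boot all_order all_algebra.
From mathcomp Require Import all_classical all_reals all_analysis.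
Set Implicit Arguments. Unset Strict Implicit. Unset Printing Implicit Defensive.
Import Order.TTheory GRing.Theory Num.Theory.
Local Open Scope classical_set_scope.
Local Open Scope ring_scope.

(* Indexing convention: the sequence s is 0-based, s k stands for xi_(k+1).
   bet_state x s n = (W_n, B_(n+1)), with W_0 = x, B_1 = 1,
   W_n = W_(n-1) + xi_n B_n, B_(n+1) = B_n * 2^(xi_n). *)
Fixpoint bet_state {R : realType} (x : R) (s : nat -> R) (n : nat) : R * R :=
  match n with
  | 0 => (x, 1)
  | k.+1 => let wb := bet_state x s k in
            (wb.1 + s k * wb.2, wb.2 * (2 `^ (s k)))
  end.

Definition wealth {R : realType} (x : R) (s : nat -> R) (n : nat) : R :=
  (bet_state x s n).1.

(* Mutual independence of a sequence of real random variables: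
   product rule for every finite family of measurable events
   (the first n variables; taking A i = setT covers every finite subfamily). *)
Definition mutually_independent {d} {T : measurableType d} {R : realType}
  (P : probability T R) (X : nat -> T -> R) : Prop :=
  forall (n : nat) (A : nat -> set R), (forall i, measurable (A i)) ->
    P (\bigcap_(i in `I_n) (X i @^-1` A i)) =
    (\prod_(i < n) P (X i @^-1` A i))%E.

Definition iid_pm1 {d} {T : measurableType d} {R : realType}
  (P : probability T R) (X : nat -> T -> R) (p : R) : Prop :=
  [/\ forall n, measurable_fun setT (X n),
      mutually_independent P X,
      forall n, P (X n @^-1` [set 1]) = p%:E
    & forall n, P (X n @^-1` [set -1]) = (1 - p)%:E].

Definition ruin {T : Type} {R : realType} (x : R) (X : nat -> T -> R) : set T :=
  [set w | exists n, wealth x (fun k => X k w) n <= 0].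

(* Main.v *)
Require Import Defs.
From HB Require Import structures.
From mathcomp Require Import all_boot all_order all_algebra.
From mathcomp Require Import all_classical all_reals all_analysis.
From mathcomp Require Import lra ring zify measurable_realfun.
Import Order.TTheory GRing.Theory Num.Theory.
Local Open Scope ring_scope.
Section PartA.
Context {R : realType}.
Implicit Types (p q z y : R).

Fixpoint G p (n : nat) z : R :=
  if z <= 1/2 then 1 else
  match n with 0 => 0 | n'.+1 => p * G p n' (z/2) + (1-p) * G p n' (2*z-1) end.

Lemma G_le (p z : R) n : z <= 1/2 -> G p n z = 1.
Proof. by case: n => [|n] /= ->. Qed.

Lemma G_gt0 p z : 1/2 < z -> G p 0 z = 0.
Proof. by move=> h /=; rewrite leNgt h. Qed.

Lemma G_gtS p z n : 1/2 < z -> G p n.+1 z = p * G p n (z/2) + (1-p) * G p n (2*z-1).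
Proof. by move=> h /=; rewrite leNgt h. Qed.

Lemma G01 p n z : 0 <= p <= 1 -> 0 <= G p n z <= 1.
Proof.
move=> /andP[p0 p1]; elim: n z => [|n IH] z.
  by rewrite /=; case: ifP => _; lra.
case: (lerP z (1/2)) => hz; first by rewrite G_le //; lra.
rewrite G_gtS //.
have /andP[a0 a1] := IH (z/2); have /andP[b0 b1] := IH (2*z-1).
apply/andP; split; nra.
Qed.

Lemma G_mono_z p n z z' : 0 <= p <= 1 -> z <= z' -> G p n z' <= G p n z.
Proof.
move=> hp; elim: n z z' => [|n IH] z z' hzz'.
  case: (lerP z' (1/2)) => h'; first by rewrite !G_le //; lra.
  rewrite G_gt0 //; by have /andP[] := G01 p 0 z hp.
case: (lerP z' (1/2)) => h'.
  by rewrite !G_le //; lra.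
case: (lerP z (1/2)) => h.
  rewrite (G_le _ _ _ h); by have /andP[] := G01 p n.+1 z' hp.
rewrite !G_gtS //.
have := IH (z/2) (z'/2) ltac:(lra). have := IH (2*z-1) (2*z'-1) ltac:(lra).
move: hp => /andP[p0 p1] ha hb; nra.
Qed.

Lemma G_flip p n z : 0 <= p <= 1 -> 1/2 < z -> G p n (2*z-1) <= G p n (z/2).
Proof.
move=> hp hz; case: (lerP (2/3) z) => h.
  by apply: G_mono_z => //; lra.
rewrite (G_le _ _ _ (_ : z/2 <= 1/2)); last lra.
by have /andP[] := G01 p n (2*z-1) hp.
Qed.

Lemma G_mono_p p q n z : 0 <= p -> p <= q -> q <= 1 -> G p n z <= G q n z.
Proof.
move=> p0 pq q1; elim: n z => [|n IH] z; first by [].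
case: (lerP z (1/2)) => h; first by rewrite !G_le.
rewrite !G_gtS //.
have hf := G_flip q n z (_ : 0 <= q <= 1) h.
have := IH (z/2); have := IH (2*z-1).
have := hf ltac:(apply/andP; lra).
set a := G p n (z/2); set b := G p n (2*z-1).
set a' := G q n (z/2); set b' := G q n (2*z-1).
move=> h1 h2 h3.
have e1 : 0 <= (q-p)*(a'-b') by apply: mulr_ge0; lra.
have e2 : 0 <= p*(a'-a) by apply: mulr_ge0; lra.
have e3 : 0 <= (1-p)*(b'-b) by apply: mulr_ge0; lra.
nra.
Qed.

Lemma G_mono_n p n z : 0 <= p <= 1 -> G p n z <= G p n.+1 z.
Proof.
move=> hp; elim: n z => [|n IH] z.
  case: (lerP z (1/2)) => h; first by rewrite !G_le.
  rewrite G_gt0 //; by have /andP[] := G01 p 1 z hp.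
case: (lerP z (1/2)) => h; first by rewrite !G_le.
rewrite (G_gtS _ _ n.+1) // (G_gtS _ _ n) //.
have := IH (z/2); have := IH (2*z-1); move: hp => /andP[p0 p1] h1 h2; nra.
Qed.

Lemma G_mono_nn p n m z : 0 <= p <= 1 -> (n <= m)%N -> G p n z <= G p m z.
Proof.
move=> hp /subnKC <-; elim: (m - n)%N => [|k IH]; first by rewrite addn0.
by rewrite addnS (le_trans IH) // G_mono_n.
Qed.

Lemma G_one p n : 0 <= p <= 1 -> 1 - (1-p)^+n <= G p n 1.
Proof.
move=> /[dup] hp /andP[p0 p1]; elim: n => [|n IH]; first by rewrite expr0 /=; case: ifP; lra.
rewrite G_gtS; last lra.
rewrite G_le; last lra.
rewrite (_ : 2*1-1 = 1 :> R); last lra.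
rewrite exprS; nra.
Qed.

Lemma G_le1 p n w : 0 <= p <= 1 -> w <= 1 -> 1 - (1-p)^+n <= G p n w.
Proof. by move=> hp hw; apply: (le_trans (G_one p n hp)); apply: G_mono_z. Qed.

Lemma G_delta1 p q n z : 0 <= p -> p <= q -> q <= 1 -> 1/2 < z ->
  q * (G q n (z/2) - G p n (z/2)) <= G q n.+1 z - G p n.+1 z.
Proof.
move=> p0 pq q1 hz; rewrite !G_gtS //.
have hf := G_flip p n z (_ : 0 <= p <= 1) hz.
have := G_mono_p p q n (z/2) p0 pq q1; have := G_mono_p p q n (2*z-1) p0 pq q1.
have := hf ltac:(apply/andP; lra).
set a := G p n (z/2); set b := G p n (2*z-1).
set a' := G q n (z/2); set b' := G q n (2*z-1).
move=> h1 h2 h3.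
have e1 : 0 <= (q-p)*(a-b) by apply: mulr_ge0; lra.
have e3 : 0 <= (1-q)*(b'-b) by apply: mulr_ge0; lra.
nra.
Qed.

Lemma G_delta2 p q n z : 0 <= p -> p <= q -> q <= 1 -> 1/2 < z ->
  (q - p) * (G p n (z/2) - G p n (2*z-1)) <= G q n.+1 z - G p n.+1 z.
Proof.
move=> p0 pq q1 hz; rewrite !G_gtS //.
have := G_mono_p p q n (z/2) p0 pq q1; have := G_mono_p p q n (2*z-1) p0 pq q1.
set a := G p n (z/2); set b := G p n (2*z-1).
set a' := G q n (z/2); set b' := G q n (2*z-1).
move=> h1 h2.
have e2 : 0 <= q*(a'-a) by apply: mulr_ge0; lra.
have e3 : 0 <= (1-q)*(b'-b) by apply: mulr_ge0; lra.
nra.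
Qed.

End PartA.
Section Escape.
Context {R : realType}.

Lemma ln_diff_le (u : R) : 1 < u -> ln u - ln (u - 1) <= 1 / (u - 1).
Proof.
move=> hu.
have h1 : 0 < u - 1 by lra.
have -> : u = (u - 1) * (1 + 1/(u-1)) by field; lra.
rewrite lnM ?posrE //; last by rewrite addr_gt0 // divr_gt0.
rewrite (_ : (u - 1) * (1 + 1 / (u - 1)) - 1 = u - 1); last by field; lra.
rewrite [ln _ + _]addrC addrK. apply: le_ln1Dx. have : 0 < 1/(u-1) by rewrite divr_gt0. lra.
Qed.

Lemma escape (p : R) : 0 < p -> p < 1/2 ->
  exists Y c0, 2 <= Y /\ 0 < c0 /\ forall n y, Y <= y -> G p n y <= 1 - c0.
Proof.
move=> p0 ph.
pose r := (1-p)/p.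
have r1 : 1 < r by rewrite /r ltr_pdivlMr //; lra.
pose E := expR (ln r / 2).
have EE : E * E = r.
  rewrite /E -expRD (_ : ln r / 2 + ln r / 2 = ln r); last by field.
  by rewrite lnK // posrE; lra.
have E1 : 1 < E by rewrite /E expR_gt1 divr_gt0 // ln_gt0.
have l2 : 0 < ln (2:R) by rewrite ln_gt0 //; lra.
pose beta := ln E / ln 2.
have beta0 : 0 < beta by rewrite divr_gt0 // ln_gt0.
have bl2 : beta * ln 2 = ln E by rewrite /beta; field; lra.
pose S := E / (1 - p) - 1.
have hS : (1 - p) * (S + 1) = E by rewrite /S; field; lra.
have S1 : 1 < S.
  have h4 : 4 * p * (1-p) < 1 by nra.
  have h2E : 2 * (1-p) < E.
    case: (ltP (2*(1-p)) E) => // hle.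
    have : E * E <= (2 * (1-p)) * (2 * (1-p)) by nra.
    rewrite EE /r => h5.
    rewrite ler_pdivrMr // in h5.
    nra.
  rewrite /S ltrBrDl ltr_pdivlMr; lra.
have key : p * S * E + (1-p) / E <= 1.
  have hpr : p * (E*E) = 1 - p by rewrite EE /r; field; lra.
  rewrite -(@ler_pM2r _ E); last lra.
  rewrite mulrDl mul1r (_ : (1 - p) / E * E = 1 - p); last by field; lra.
  have -> : p * S * E * E = S * (p * (E*E)) by ring.
  rewrite hpr; nra.
have lS : 0 < ln S by rewrite ln_gt0.
pose A := 3 + beta / ln S.
have A3 : 3 <= A by rewrite /A lerDl; apply/ltW/divr_gt0.
pose psi y := if A <= y - 1 then expR (beta * (ln A - ln (y - 1))) else 1.
have psi_le1 y : psi y <= 1.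
  rewrite /psi; case: ifP => // h.
  rewrite expR_le1 pmulr_rle0 // subr_le0 ler_ln // posrE; lra.
have psi_ge0 y : 0 <= psi y by rewrite /psi; case: ifP => _ //; exact: expR_ge0.
have super y : 1/2 < y -> p * psi (y/2) + (1-p) * psi (2*y-1) <= psi y.
  move=> hy; rewrite {3}/psi; case: ifP => hA; last first.
    have := psi_le1 (y/2); have := psi_le1 (2*y-1); nra.
  set u := y - 1 in hA *.
  have u0 : 0 < u by lra.
  have hL : psi (2*y-1) = expR (beta * (ln A - ln u)) / E.
    rewrite /psi (_ : 2*y-1-1 = 2 * u); last by rewrite /u; ring.
    rewrite ifT; last lra.
    rewrite lnM ?posrE; try lra.
    rewrite (_ : beta * (ln A - (ln 2 + ln u)) = beta * (ln A - ln u) + - (beta * ln 2)); last by ring.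
    by rewrite expRD expRN bl2 lnK // posrE; lra.
  have hW : psi (y/2) <= expR (beta * (ln A - ln u)) * S * E.
    have hu2 : y/2 - 1 = (u - 1)/2 by rewrite /u; field.
    have hu1 : 0 < u - 1 by lra.
    have lnW : ln ((u-1)/2) = ln (u - 1) - ln 2 by rewrite ln_div // posrE; lra.
    apply: (@le_trans _ _ (expR (beta * (ln A - ln ((u-1)/2))))).
      rewrite /psi hu2; case: ifP => // hA2.
      rewrite -[leLHS]expR0 ler_expR; apply: mulr_ge0; first lra.
      rewrite subr_ge0 ler_ln ?posrE; try lra.
    rewrite lnW (_ : beta * (ln A - (ln (u - 1) - ln 2)) =
        beta * (ln A - ln u) + (beta * (ln u - ln (u-1)) + beta * ln 2)); last by ring.
    rewrite !expRD bl2 lnK ?posrE; last lra.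
    rewrite -mulrA ler_pM2l ?expR_gt0 // ler_pM2r; last lra.
    rewrite -[X in _ <= X]lnK ?posrE; last lra.
    rewrite ler_expR.
    apply: (@le_trans _ _ (beta * (1/(u-1)))).
      by rewrite ler_pM2l // ln_diff_le //; lra.
    rewrite mul1r ler_pdivrMr //.
    have : A - 1 <= u - 1 by lra.
    have : ln S * (A - 1) = 2 * ln S + beta by rewrite /A; field; lra.
    nra.
  rewrite hL.
  set Psi := expR (beta * (ln A - ln u)).
  have Psi0 : 0 < Psi by apply: expR_gt0.
  apply: (@le_trans _ _ (Psi * (p * S * E + (1-p)/E))); last by apply: ler_piMr => //; apply: ltW.
  have : p * psi (y/2) <= p * (Psi * S * E) by rewrite ler_pM2l.
  rewrite (_ : Psi * (p * S * E + (1 - p) / E) = p * (Psi * S * E) + (1-p) * (Psi / E)); last by field; lra.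
  lra.
have Gpsi n y : G p n y <= psi y.
  elim: n y => [|n IH] y.
    case: (lerP y (1/2)) => hy.
      rewrite G_le // /psi ifF //; apply/negbTE; rewrite -ltNge; lra.
    by rewrite G_gt0.
  case: (lerP y (1/2)) => hy.
    rewrite G_le // /psi ifF //; apply/negbTE; rewrite -ltNge; lra.
  rewrite G_gtS //; apply: le_trans (super y hy).
  have := IH (y/2); have := IH (2*y-1); nra.
exists (A + 2), (1 - expR (beta * (ln A - ln (A + 1)))).
split; first lra.
split.
  rewrite subr_gt0 expR_lt1 pmulr_rlt0 // subr_lt0 ltr_ln ?posrE; lra.
move=> n y hy; apply: (le_trans (Gpsi n y)).
rewrite /psi ifT; last lra.
rewrite (_ : 1 - (1 - expR (beta * (ln A - ln (A + 1)))) = expR (beta * (ln A - ln (A + 1)))); last by ring.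
rewrite ler_expR ler_pM2l // lerD2l lerN2 ler_ln ?posrE; lra.
Qed.
End Escape.
Section Strict.
Context {R : realType}.

Lemma bernoulli_ineq (h : R) n : 0 <= h -> 1 + n%:R * h <= (1 + h) ^+ n.
Proof.
move=> h0; elim: n => [|n IH]; first by rewrite expr0 mul0r addr0.
rewrite exprS -natr1.
have : 0 <= n%:R * h by apply: mulr_ge0.
have : 0 <= (1 + h) ^+ n by apply: exprn_ge0; lra.
nra.
Qed.

Lemma pow_small (a eps : R) : 0 <= a -> a < 1 -> 0 < eps ->
  exists N, forall n, (N <= n)%N -> a ^+ n <= eps.
Proof.
move=> a0 a1 e0.
have [->|an0] := eqVneq a 0.
  exists 1%N => n hn; rewrite expr0n; case: n hn => //= n _; exact: ltW.
have ap : 0 < a by rewrite lt_neqAle eq_sym an0.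
pose h := 1 / a - 1.
have h0 : 0 < h by rewrite /h subr_gt0 ltr_pdivlMr // mul1r.
have ah : a * (1 + h) = 1 by rewrite /h; field; apply/eqP; lra.
exists (Num.Def.archi_bound (1 / (eps * h))) => n hn.
have hb := @archi_boundP _ (1 / (eps * h)) ltac:(apply/ltW/divr_gt0 => //; exact: mulr_gt0).
have hN : (1 / (eps * h)) < n%:R.
  apply: (lt_le_trans hb); by rewrite ler_nat.
have hB := bernoulli_ineq h n (ltW h0).
have hp : a ^+ n * (1 + h) ^+ n = 1 by rewrite -exprMn ah expr1n.
have an0' : 0 <= a ^+ n by apply: exprn_ge0.
have hN' : 1 < n%:R * (eps * h) by rewrite -ltr_pdivrMr // mulr_gt0.
have h1 : a ^+ n * (1 + n%:R * h) <= 1 by rewrite -[leRHS]hp; apply: ler_wpM2l.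
have h2 : a ^+ n * (n%:R * h) <= 1.
  have : 0 <= a ^+ n by []. nra.
have h3 : a ^+ n * (n%:R * h) * eps <= eps by nra.
have h4 : a ^+ n <= a ^+ n * (n%:R * (eps * h)).
  rewrite ler_peMr //; exact: ltW.
nra.
Qed.

Lemma exists_pow2_ge (t : R) : exists k, t <= 2 ^+ k.
Proof.
case: (lerP t 0) => ht; first by exists 0%N; rewrite expr0; lra.
exists (Num.Def.archi_bound t).
have := @archi_boundP _ t (ltW ht) => h.
apply: (le_trans (ltW h)).
rewrite -natrX ler_nat.
by apply/ltnW/ltn_expl.
Qed.

End Strict.
Section S2.
Context {R : realType}.
Lemma div2S (z : R) i : z / 2 ^+ i.+1 = z / 2 / 2 ^+ i.
Proof. by rewrite exprS invfM mulrA. Qed.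

Lemma halving (z : R) : 1 < z -> exists i, 1 < z / 2 ^+ i <= 2.
Proof.
move=> hz; have [k hk] := exists_pow2_ge z.
elim: k z hz hk => [|k IH] z hz hk; first by rewrite expr0 in hk; lra.
case: (lerP z 2) => h2.
  by exists 0%N; rewrite expr0 divr1 hz h2.
have [i hi] := IH (z/2) ltac:(lra) ltac:(rewrite exprS in hk; lra).
by exists i.+1; rewrite div2S.
Qed.

Lemma propagate (p Y c0 : R) : 0 <= p <= 1 -> 2 <= Y ->
  (forall n y, Y <= y -> G p n y <= 1 - c0) ->
  forall j n y, Y - 1 <= 2 ^+ j * (y - 1) -> G p n y <= 1 - (1-p) ^+ j * c0.
Proof.
move=> /[dup] hp /andP[p0 p1] Y2 hY.
have c01 : c0 <= 1 by have := hY 0%N Y (lexx _); rewrite G_gt0; lra.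
elim=> [|j IH] n y hy.
  by rewrite expr0 mul1r; apply: hY; rewrite expr0 mul1r in hy; lra.
have pj : 0 < 2 ^+ j.+1 :> R by apply: exprn_gt0.
have y1 : 1 < y.
  case: (lerP y 1) => // hy1.
  have : 2 ^+ j.+1 * (y - 1) <= 0 by apply: mulr_ge0_le0; lra.
  lra.
have hpj : 0 <= (1 - p) ^+ j by apply: exprn_ge0; lra.
have hpj1 : (1 - p) ^+ j <= 1 by apply: exprn_ile1; lra.
case: n => [|n].
  rewrite G_gt0; last lra.
  rewrite exprS.
  have t0 : 0 <= (1-p) * (1-p)^+j by apply: mulr_ge0; lra.
  have t1 : (1-p) * (1-p)^+j <= 1 by nra.
  move: t0 t1; set t := (1-p) * (1-p)^+j => t0 t1.
  case: (lerP 0 c0) => hc; nra.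
rewrite G_gtS; last lra.
have := IH n (2*y-1) ltac:(rewrite exprS in hy; lra).
have /andP[_ g1] := G01 p n (y/2) hp.
rewrite exprS => h.
nra.
Qed.

Lemma delta_iter (p q : R) : 0 <= p -> p <= q -> q <= 1 ->
  forall i z n, 1/2 < z / 2 ^+ i ->
  q ^+ i * (G q n (z / 2 ^+ i) - G p n (z / 2 ^+ i)) <= G q (n + i) z - G p (n + i) z.
Proof.
move=> p0 pq q1; elim=> [|i IH] z n hz.
  by rewrite expr0 mul1r divr1 addn0.
have e := div2S z i.
rewrite e in hz *.
have hz' : 1/2 < z.
  have pi : 1 <= 2 ^+ i.+1 :> R by apply: exprn_ege1; lra.
  rewrite -e in hz.
  have z0 : 0 < z.
    case: (lerP z 0) => // hz0.
    have : z / 2 ^+ i.+1 <= 0 by apply: mulr_le0_ge0 => //; rewrite invr_ge0; lra.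
    lra.
  apply: (lt_le_trans hz). rewrite ler_pdivrMr; last lra. nra.
have := IH (z/2) n hz.
have := G_delta1 p q (n + i) z p0 pq q1 hz'.
rewrite addnS exprS => h1 h2.
have q0 : 0 <= q by lra.
have := ler_wpM2l q0 h2.
rewrite mulrA. lra.
Qed.

End S2.
Lemma nat_aux (m i N1 : nat) : ((N1 + i).+1 <= m)%N -> (N1 <= m - i.+1)%N /\ ((m - i.+1).+1 + i = m)%N.
Proof. move=> h; split; lia. Qed.

Section S3.
Context {R : realType}.
Lemma strict_G (p q z0 : R) : 0 < p -> p < q -> q < 1/2 -> 1 < z0 ->
  exists2 delta, 0 < delta & exists N, forall n, (N <= n)%N -> G p n z0 + delta <= G q n z0.
Proof.
move=> p0 pq qh hz0.
have hp : 0 <= p <= 1 by apply/andP; lra.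
have [Y [c0 [Y2 [c00 hY]]]] := escape p p0 (lt_trans pq qh).
have [i /andP[zs1 zs2]] := halving z0 hz0.
set zs := z0 / 2 ^+ i in zs1 zs2.
have [j hj] := exists_pow2_ge ((Y - 1) / (2 * zs - 1 - 1)).
have hj' : Y - 1 <= 2 ^+ j * (2 * zs - 1 - 1).
  rewrite -ler_pdivrMr; [exact: hj|lra].
pose gam := (1 - p) ^+ j * c0.
have gam0 : 0 < gam by apply: mulr_gt0 => //; apply: exprn_gt0; lra.
have hG : forall n, G p n (2 * zs - 1) <= 1 - gam := fun n => propagate p Y c0 hp Y2 hY j n (2 * zs - 1) hj'.
have [N1 hN1] := pow_small (1 - p) (gam / 2) ltac:(lra) ltac:(lra) ltac:(lra).
have hD : forall n, (N1 <= n)%N -> (q - p) * (gam / 2) <= G q n.+1 zs - G p n.+1 zs.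
  move=> n hn.
  apply: le_trans (G_delta2 p q n zs (ltW p0) (ltW pq) (ltW (lt_trans qh _)) _); last 2 first.
  - lra.
  - lra.
  apply: ler_wpM2l; first lra.
  have := G_le1 p n (zs/2) hp ltac:(lra).
  have := hG n. have := hN1 n hn. lra.
exists (q ^+ i * ((q - p) * (gam / 2))).
  apply: mulr_gt0; first by apply: exprn_gt0; lra.
  apply: mulr_gt0; lra.
exists (N1 + i).+1 => m hm.
have [hn1 hm'] := nat_aux m i N1 hm.
have q1 : q <= 1 by lra.
have hzs : 1/2 < z0 / 2 ^+ i by rewrite -/zs; lra.
have := delta_iter p q (ltW p0) (ltW pq) q1 i z0 (m - i.+1).+1 hzs.
rewrite hm' -/zs => h.
have h2 := hD (m - i.+1)%N hn1.
have qi : 0 <= q ^+ i by apply: exprn_ge0; lra.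
have := ler_wpM2l qi h2. lra.
Qed.
End S3.
Section Det.
Context {R : realType}.
Implicit Types (s : nat -> R) (x : R).

Definition zf (wb : R * R) : R := wb.1 / wb.2 - 1.

Lemma bs_S x s k : bet_state x s k.+1 =
  ((bet_state x s k).1 + s k * (bet_state x s k).2, (bet_state x s k).2 * 2 `^ (s k)).
Proof. by []. Qed.

Lemma bs_ext x s s' k : (forall i, (i < k)%N -> s i = s' i) -> bet_state x s k = bet_state x s' k.
Proof.
elim: k => [//|k IH] h.
rewrite !bs_S IH; last by move=> i hi; apply: h; apply: ltnW.
by rewrite h.
Qed.

Lemma B_pos x s k : 0 < (bet_state x s k).2.
Proof.
elim: k => [|k IH]; first by rewrite /= ltr01.
by rewrite bs_S /= mulr_gt0 // powR_gt0.
Qed.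

Lemma z_win x s k : s k = 1 -> zf (bet_state x s k.+1) = zf (bet_state x s k) / 2.
Proof.
move=> h; rewrite /zf bs_S /= h powRr1 ?mul1r; last lra.
have := B_pos x s k; set B := (bet_state x s k).2 => hB.
have hB0 : B != 0 by rewrite gt_eqF.
by field; rewrite ?hB0 ?andbT.
Qed.

Lemma z_loss x s k : s k = -1 -> zf (bet_state x s k.+1) = 2 * zf (bet_state x s k) - 1.
Proof.
move=> h; rewrite /zf bs_S /= h powR_inv1; last lra.
have := B_pos x s k; set B := (bet_state x s k).2 => hB.
have hB0 : B != 0 by rewrite gt_eqF.
by field; rewrite ?hB0 ?andbT.
Qed.

Lemma zf_le x s k c : ((bet_state x s k).1 <= (c + 1) * (bet_state x s k).2) = (zf (bet_state x s k) <= c).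
Proof.
have := B_pos x s k; rewrite /zf.
set B := (bet_state x s k).2; set W := (bet_state x s k).1 => hB.
by rewrite lerBlDr -ler_pdivrMr // mulrC.
Qed.

Lemma z_inv x s c k m : 0 <= c <= 1 -> (k <= m)%N ->
  (forall j, (k <= j)%N -> (j < m)%N -> s j = 1 \/ s j = -1) ->
  zf (bet_state x s k) <= c -> zf (bet_state x s m) <= c.
Proof.
move=> /andP[c0 c1] /subnKC <-; elim: (m - k)%N => [|n IH] hs hk.
  by rewrite addn0.
rewrite addnS; rewrite addnS in hs.
have IH' := IH (fun j h1 h2 => hs j h1 (leqW h2)) hk.
have := hs (k + n)%N (leq_addr _ _) (ltnSn _).
case=> h; [rewrite z_win // | rewrite z_loss //]; last lra.
case: (lerP 0 (zf (bet_state x s (k + n)))) => h0; lra.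
Qed.

End Det.
Definition sgnb {R : realType} (c : bool) : R := if c then 1 else -1.

Section Meas.
Local Open Scope classical_set_scope.
Context {R : realType} {d : measure_display} {T : measurableType d}.
Variables (P : probability T R) (X : nat -> T -> R) (p x : R).
Hypothesis hX : iid_pm1 P X p.

Definition wt (c : bool) : R := if c then p else 1 - p.
Definition stX k := fun w => (bet_state x (fun i => X i w) k).1.
Definition stB k := fun w => (bet_state x (fun i => X i w) k).2.

Lemma mX k : measurable_fun setT (X k).
Proof. by case: hX. Qed.

Lemma st_meas k : measurable_fun setT (stX k) /\ measurable_fun setT (stB k).
Proof.
elim: k => [|k [IH1 IH2]]; first by split; apply: measurable_cst.
split.
- apply: measurable_funD => //; apply: measurable_funM => //; exact: mX.
- apply: measurable_funM => //; apply: measurableT_comp => //; [exact: measurable_powRr|exact: mX].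
Qed.

Lemma meas_le (f g : T -> R) : measurable_fun setT f -> measurable_fun setT g ->
  measurable [set w | f w <= g w].
Proof.
move=> mf mg; have := measurable_fun_ler mf mg measurableT (_ : measurable [set true]).
rewrite setTI => /(_ I) h.
by rewrite (_ : [set w | f w <= g w] = (fun w => f w <= g w) @^-1` [set true]).
Qed.

Definition Cyl k (b : nat -> bool) := [set w | forall i, (i < k)%N -> X i w = sgnb (b i)].

Lemma Cyl_bigcap k b : Cyl k b = \bigcap_(i in `I_k) (X i @^-1` [set sgnb (b i)]).
Proof. by apply/seteqP; split => w /= h i hi; apply: h. Qed.

Lemma Cyl_meas k b : measurable (Cyl k b).
Proof.
rewrite Cyl_bigcap; apply: bigcap_measurableType => i _.
by rewrite -[_ @^-1` _]setTI; apply: mX.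
Qed.

Lemma PX1 k : P (X k @^-1` [set 1]) = p%:E. Proof. by case: hX. Qed.
Lemma PXm1 k : P (X k @^-1` [set -1]) = (1 - p)%:E. Proof. by case: hX. Qed.

Lemma PCyl k b : P (Cyl k b) = (\prod_(i < k) wt (b i))%:E.
Proof.
have [_ ind _ _] := hX.
rewrite Cyl_bigcap ind; last by move=> i; exact: measurable_set1.
rewrite -prodEFin; apply: eq_bigr => i _.
by rewrite /wt /sgnb; case: (b i); [exact: PX1|exact: PXm1].
Qed.

Lemma mS k (v : R) : measurable (X k @^-1` [set v]).
Proof. by rewrite -[_ @^-1` _]setTI; apply: mX => //; exact: measurable_set1. Qed.

Lemma S_disj k : X k @^-1` [set 1] `&` X k @^-1` [set -1] = set0 :> set T.
Proof. by apply/seteqP; split => w //= [-> h]; move: h; lra. Qed.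

Lemma split_step (E : set T) k : measurable E ->
  (P E = P (E `&` X k @^-1` [set 1%R]) + P (E `&` X k @^-1` [set (-1)%R]))%E.
Proof.
move=> mE.
set S1 := X k @^-1` [set 1]; set S2 := X k @^-1` [set -1].
have m1 : measurable S1 := mS k 1; have m2 : measurable S2 := mS k (-1).
have mU : measurable (S1 `|` S2) by apply: measurableU.
have PU : P (S1 `|` S2) = 1%E.
  rewrite measureU //; last exact: S_disj.
  transitivity (p%:E + (1 - p)%:E)%E; first by congr (_ + _)%E; [exact: PX1|exact: PXm1].
  by rewrite -EFinD; congr EFin; ring.
have PC : P (~` (S1 `|` S2)) = 0%E by rewrite probability_setC // PU subee.
have E0 : P (E `\` (S1 `|` S2)) = 0%E.
  apply: (@subset_measure0 _ _ _ P _ _ (measurableD mE mU) (measurableC mU)).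
  - by move=> w [].
  - exact: PC.
transitivity (P (E `\` (S1 `|` S2)) + P (E `&` (S1 `|` S2)))%E.
  exact: (measureDI P mE mU).
rewrite E0 add0e setIUr measureU //; try by apply: measurableI.
by rewrite setIACA (S_disj k) setI0.
Qed.

Definition hitset k := [set w | stX k w <= (1/2 + 1) * stB k w].

Fixpoint Hk k n := match n with 0 => hitset k | n'.+1 => hitset k `|` Hk k.+1 n' end.

Lemma hitset_meas k : measurable (hitset k).
Proof.
apply: meas_le; first exact: (st_meas k).1.
by apply: measurable_funM => //; exact: (st_meas k).2.
Qed.

Lemma Hk_meas n : forall k, measurable (Hk k n).
Proof.
elim: n => [|n IH] k; first exact: hitset_meas.
by apply: measurableU; [exact: hitset_meas|exact: IH].
Qed.

Definition zb k (b : nat -> bool) := zf (bet_state x (fun i => sgnb (b i)) k).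
Definition bset (b : nat -> bool) k c := fun i => if i == k then c else b i.

Lemma st_cyl k b w : Cyl k b w ->
  bet_state x (fun i => X i w) k = bet_state x (fun i => sgnb (b i)) k.
Proof. by move=> h; apply: bs_ext => i hi; exact: (h i hi). Qed.

Arguments st_cyl {k b w}.

Lemma hit_cyl k b w : Cyl k b w -> (stX k w <= (1/2 + 1) * stB k w) = (zb k b <= 1/2).
Proof. by move=> h; rewrite /stX /stB /zb (st_cyl h) zf_le. Qed.

Arguments hit_cyl {k b w}.

Lemma hit_cylP k b w : Cyl k b w -> (hitset k w <-> (zb k b <= 1/2)).
Proof.
move=> h; have e := hit_cyl h; split => hh.
  by rewrite -e; exact: hh.
by change (stX k w <= (1/2 + 1) * stB k w); rewrite e.
Qed.
Arguments hit_cylP {k b w}.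

Lemma Cyl_S k b c : Cyl k.+1 (bset b k c) = Cyl k b `&` X k @^-1` [set sgnb c].
Proof.
apply/seteqP; split => w /=.
  move=> h; split; last by have := h k (ltnSn k); rewrite /bset eqxx.
  by move=> i hi; have := h i (ltnW hi); rewrite /bset (ltn_eqF hi).
move=> [h1 h2] i; rewrite ltnS leq_eqVlt => /orP[/eqP ->|hi].
  by rewrite /bset eqxx.
by rewrite /bset (ltn_eqF hi); apply: h1.
Qed.

Lemma zb_S k b c : zb k.+1 (bset b k c) = if c then zb k b / 2 else 2 * zb k b - 1.
Proof.
have e : zb k (bset b k c) = zb k b.
  by rewrite /zb (@bs_ext _ x _ (fun i => sgnb (b i))) // => i hi; rewrite /bset (ltn_eqF hi).
case: c e => e.
  rewrite /zb z_win; first by rewrite -/(zb k _) e.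
  by rewrite /bset eqxx.
rewrite /zb z_loss; first by rewrite -/(zb k _) e.
by rewrite /bset eqxx.
Qed.

Lemma prod_S k b c : \prod_(i < k.+1) wt (bset b k c i) = (\prod_(i < k) wt (b i)) * wt c.
Proof.
rewrite big_ord_recr /= /bset eqxx; congr (_ * _).
by apply: eq_bigr => i _; rewrite (ltn_eqF (ltn_ord i)).
Qed.

Lemma PH n : forall k b, P (Cyl k b `&` Hk k n) = (P (Cyl k b) * (G p n (zb k b))%:E)%E.
Proof.
elim: n => [|n IH] k b.
  case: (lerP (zb k b) (1/2)) => h.
    rewrite G_le // mule1 /=; congr (P _); apply/seteqP; split => w; first by case.
    by move=> hw; split => //; apply/(hit_cylP hw).
  rewrite G_gt0 // mule0 (_ : _ `&` _ = set0) ?measure0 //.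
  apply/seteqP; split => w // [hw] /(hit_cylP hw); lra.
case: (lerP (zb k b) (1/2)) => h.
  rewrite G_le // mule1 /=; congr (P _); apply/seteqP; split => w; first by case.
  by move=> hw; split => //; left; apply/(hit_cylP hw).
rewrite G_gtS //.
have -> : Cyl k b `&` Hk k n.+1 = Cyl k b `&` Hk k.+1 n.
  apply/seteqP; split => w [hw]; last by move=> h2; split => //; right.
  case => // /(hit_cylP hw); lra.
rewrite (split_step _ k (measurableI _ _ (Cyl_meas k b) (Hk_meas n k.+1))).
have e1 : Cyl k b `&` Hk k.+1 n `&` X k @^-1` [set 1] = Cyl k.+1 (bset b k true) `&` Hk k.+1 n.
  by rewrite Cyl_S setIAC.
have e2 : Cyl k b `&` Hk k.+1 n `&` X k @^-1` [set -1] = Cyl k.+1 (bset b k false) `&` Hk k.+1 n.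
  by rewrite Cyl_S setIAC.
rewrite e1 e2 !IH !PCyl !prod_S !zb_S /wt -!EFinM -EFinD; congr EFin; ring.
Qed.
Lemma Hk_ex n : forall k w, Hk k n w -> exists j, (j <= n)%N /\ hitset (k + j) w.
Proof.
elim: n => [|n IH] k w /=; first by move=> h; exists 0%N; rewrite addn0.
case=> [h|/IH [j [hj h]]]; first by exists 0%N; rewrite addn0.
by exists j.+1; split; [rewrite ltnS | rewrite -addSnnS].
Qed.

Lemma ex_Hk n : forall k j w, (j <= n)%N -> hitset (k + j) w -> Hk k n w.
Proof.
elim: n => [|n IH] k j w /=.
  by rewrite leqn0 => /eqP ->; rewrite addn0.
case: j => [|j] hj h; first by left; rewrite addn0 in h.
by right; apply: (IH k.+1 j) => //; rewrite addSnnS.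
Qed.

Lemma PH0 n : P (Hk 0 n) = (G p n (x - 1))%:E.
Proof.
have := PH n 0 (fun _ => true).
have -> : Cyl 0 (fun _ => true) = setT by apply/seteqP; split => w // _ i.
rewrite setTI => ->; rewrite probability_setT mul1e.
by rewrite /zb /zf /= divr1.
Qed.

Lemma wealth_hit m w : wealth x (fun k => X k w) m <= 0 -> hitset m w.
Proof.
move=> h; change (stX m w <= (1/2 + 1) * stB m w).
have := B_pos x (fun i => X i w) m; rewrite /wealth in h.
rewrite /stX /stB; lra.
Qed.

Lemma ruin_meas : measurable (ruin x X).
Proof.
have -> : ruin x X = \bigcup_m [set w | stX m w <= (fun=> 0) w].
  by apply/seteqP; split => w; [case=> m h; exists m | case=> m _ h; exists m].
apply: bigcupT_measurable => m; apply: meas_le; first exact: (st_meas m).1.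
exact: measurable_cst.
Qed.

Lemma ruin_le_sup : (P (ruin x X) <= ereal_sup (range (fun n => P (Hk 0 n))))%E.
Proof.
have ndH : nondecreasing_seq (fun n => Hk 0 n).
  move=> n m nm; rewrite subsetEset => w /Hk_ex [j [hj h]].
  by apply: (ex_Hk _ _ j) => //; apply: leq_trans nm.
have mU : measurable (\bigcup_n Hk 0 n) by apply: bigcupT_measurable => n; exact: Hk_meas.
have hc := @nondecreasing_cvg_mu _ _ _ P _ (fun n => Hk_meas n 0) mU ndH.
have ndP : nondecreasing_seq (fun n => P (Hk 0 n)).
  move=> n m nm; apply: le_measure; rewrite ?inE; try exact: Hk_meas.
  by move/subsetPset: (ndH _ _ nm).
have hs := ereal_nondecreasing_cvgn ndP.
have e : P (\bigcup_n Hk 0 n) = ereal_sup (range (fun n => P (Hk 0 n))).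
  exact: (cvg_unique _ hc hs).
rewrite -e; apply: le_measure; rewrite ?inE; first exact: ruin_meas.
  exact: mU.
move=> w [m h]; exists m => //; apply: (ex_Hk m 0 m) => //.
exact: wealth_hit.
Qed.
Lemma PU1 k : P (X k @^-1` [set 1] `|` X k @^-1` [set -1]) = 1%E.
Proof.
rewrite measureU //; try exact: mS; last exact: S_disj.
transitivity (p%:E + (1 - p)%:E)%E; first by congr (_ + _)%E; [exact: PX1|exact: PXm1].
by rewrite -EFinD; congr EFin; ring.
Qed.

Definition Good N := [set w | forall j, (j < N)%N -> X j w = 1 \/ X j w = -1].
Definition Win n m := [set w | forall j, (n <= j)%N -> (j < n + m)%N -> X j w = 1].

Lemma GoodE N : Good N = \bigcap_(j in `I_N) X j @^-1` ([set 1] `|` [set -1]).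
Proof. by apply/seteqP; split => w h j hj; apply: h. Qed.

Lemma WinE n m : Win n m = \bigcap_(j in `I_(n + m)) X j @^-1` (if (n <= j)%N then [set 1] else setT).
Proof.
apply/seteqP; split => w h j.
  by move=> hj; case: ifP => // hn; apply: h.
by move=> hn hj; have := h j hj; rewrite /= hn.
Qed.

Lemma Good_meas N : measurable (Good N).
Proof.
rewrite GoodE; apply: bigcap_measurableType => j _.
rewrite -[_ @^-1` _]setTI; apply: mX => //.
by apply: measurableU; exact: measurable_set1.
Qed.

Lemma Win_meas n m : measurable (Win n m).
Proof.
rewrite WinE; apply: bigcap_measurableType => j _.
rewrite -[_ @^-1` _]setTI; apply: mX => //.
by case: ifP => _ //; exact: measurable_set1.
Qed.

Lemma PGood N : P (Good N) = 1%E.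
Proof.
have [_ ind _ _] := hX.
rewrite GoodE ind; last by move=> j; apply: measurableU; exact: measurable_set1.
by rewrite big1 // => j _; exact: PU1.
Qed.

Lemma prod_shift (a : R) n m : \prod_(j < n + m) (if (n <= j)%N then a else 1) = a ^+ m.
Proof.
elim: m => [|m IH].
  rewrite addn0 expr0 big1 // => j _; by rewrite leqNgt ltn_ord.
by rewrite addnS big_ord_recr /= IH leq_addr exprSr.
Qed.

Lemma PWin n m : P (Win n m) = (p ^+ m)%:E.
Proof.
have [_ ind _ _] := hX.
rewrite WinE ind; last by move=> j; case: ifP => _ //; exact: measurable_set1.
rewrite -(prod_shift p n m) -prodEFin; apply: eq_bigr => j _.
case: ifP => _; first exact: PX1.
by rewrite preimage_setT probability_setT.
Qed.

Lemma ruin_of w n m : Hk 0 n w -> Good (n + m + m) w -> ~ Win n m w -> ~ Win (n + m) m w ->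
  ruin x X w.
Proof.
move=> /Hk_ex [k0 [hk0 hh]] hg hw1 hw2.
rewrite add0n in hh.
have [j1 [h11 [h12 h13]]] : exists j1, [/\ (n <= j1)%N, (j1 < n + m)%N & X j1 w = -1].
  case: (pselect (exists j1, [/\ (n <= j1)%N, (j1 < n + m)%N & X j1 w = -1])) => // hno.
  exfalso; apply: hw1 => j hj1 hj2.
  case: (hg j (leq_trans hj2 (leq_addr _ _))) => // hm.
  by exfalso; apply: hno; exists j.
have [j2 [h21 [h22 h23]]] : exists j2, [/\ (n + m <= j2)%N, (j2 < n + m + m)%N & X j2 w = -1].
  case: (pselect (exists j2, [/\ (n + m <= j2)%N, (j2 < n + m + m)%N & X j2 w = -1])) => // hno.
  exfalso; apply: hw2 => j hj1 hj2.
  case: (hg j hj2) => // hm.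
  by exfalso; apply: hno; exists j.
set s := fun i => X i w.
have z0 : zf (bet_state x s k0) <= 1/2 by rewrite -zf_le; exact: hh.
have z1 : zf (bet_state x s j1) <= 1/2.
  apply: (z_inv x s (1/2) k0 j1) => //; first by apply/andP; lra.
    exact: leq_trans hk0 h11.
  move=> j _ hj; apply: hg; apply: ltn_trans hj (leq_trans h12 (leq_addr _ _)).
have z2 : zf (bet_state x s j1.+1) <= 0 by rewrite z_loss //; lra.
have z3 : zf (bet_state x s j2) <= 0.
  apply: (z_inv x s 0 j1.+1 j2) => //; first by apply/andP; lra.
    exact: leq_trans h12 h21.
  move=> j _ hj; apply: hg; apply: ltn_trans hj h22.
have z4 : zf (bet_state x s j2.+1) <= -1 by rewrite z_loss //; lra.
exists j2.+1; rewrite /wealth.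
have e := zf_le x s j2.+1 (-1); rewrite addNr mul0r in e.
by rewrite e.
Qed.

Lemma PH_le_ruin n m : (P (Hk 0 n) <= P (ruin x X) + (2 * p ^+ m)%:E)%E.
Proof.
set A := ruin x X; set B := ~` Good (n + m + m); set C := Win n m; set D := Win (n + m) m.
have mA : measurable A := ruin_meas.
have mB : measurable B by apply: measurableC; exact: Good_meas.
have mC : measurable C := Win_meas n m.
have mD : measurable D := Win_meas (n + m) m.
have sub : Hk 0 n `<=` A `|` B `|` C `|` D.
  move=> w hw.
  case: (pselect (D w)) => hD; first by right.
  case: (pselect (C w)) => hC; first by left; right.
  case: (pselect (Good (n + m + m) w)) => hG; last by left; left; right.
  by left; left; left; exact: (ruin_of w n m hw hG hC hD).
have h1 : (P (Hk 0 n) <= P (A `|` B `|` C `|` D))%E.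
  apply: le_measure => //; rewrite inE //; first exact: Hk_meas.
  by apply: measurableU => //; apply: measurableU => //; apply: measurableU.
have h2 : (P (A `|` B `|` C `|` D) <= P (A `|` B `|` C) + P D)%E.
  by apply: measureU2 => //; apply: measurableU => //; apply: measurableU.
have h3 : (P (A `|` B `|` C) <= P (A `|` B) + P C)%E.
  by apply: measureU2 => //; apply: measurableU.
have h4 : (P (A `|` B) <= P A + P B)%E by apply: measureU2.
have PB : P B = 0%E by rewrite probability_setC ?PGood ?subee //; exact: Good_meas.
rewrite PB adde0 in h4.
have PC : P C = (p ^+ m)%:E := PWin n m.
have PD : P D = (p ^+ m)%:E := PWin (n + m) m.
rewrite PC in h3; rewrite PD in h2.
apply: (le_trans h1); apply: (le_trans h2).
apply: (le_trans (leeD2r _ h3)).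
apply: (le_trans (leeD2r _ (leeD2r _ h4))).
by rewrite -addeA -EFinD mulr2n mulrDl mul1r.
Qed.
End Meas.
Theorem corollary1p4 (R : realType) (x p q : R) :
  2 < x -> 0 < p -> p < q -> q < 1 / 2 ->
  forall (d : measure_display) (T : measurableType d) (P : probability T R)
         (X : nat -> T -> R)
         (d' : measure_display) (T' : measurableType d') (P' : probability T' R)
         (X' : nat -> T' -> R),
    iid_pm1 P X p -> iid_pm1 P' X' q ->
    (P (ruin x X) < P' (ruin x X'))%E.
Proof.
move=> hx p0 pq qh d T P X d' T' P' X' hXp hXq.
have z0 : 1 < x - 1 by lra.
have [del del0 [N hN]] := strict_G p q (x - 1) p0 pq qh z0.
have [m hm] := pow_small q (del / 4) ltac:(lra) ltac:(lra) ltac:(lra).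
have hqm := hm m (leqnn m).
have hfin : P' (ruin x X') \is a fin_num.
  by apply: fin_num_measure; exact: (ruin_meas P' X' q x hXq).
set lq := fine (P' (ruin x X')).
have elq : P' (ruin x X') = lq%:E by rewrite /lq fineK.
have claim : forall n, (P (Hk X x 0 n) <= (lq + 2 * q ^+ m - del)%:E)%E.
  move=> n; rewrite (PH0 P X p x hXp) lee_fin.
  set n' := maxn n N.
  have h1 : G p n (x - 1) <= G p n' (x - 1).
    apply: G_mono_nn; [apply/andP; lra | exact: leq_maxl].
  have h2 := hN n' (leq_maxr n N).
  have h3 := PH_le_ruin P' X' q x hXq n' m.
  rewrite (PH0 P' X' q x hXq) elq -EFinD lee_fin in h3.
  lra.
rewrite elq.
apply: (le_lt_trans (ruin_le_sup P X p x hXp)).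
apply: (@le_lt_trans _ _ (lq + 2 * q ^+ m - del)%:E).
  by apply: ge_ereal_sup => _ [n _ <-]; exact: claim.
rewrite lte_fin; lra.
Qed.
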